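(* For any $S\ge1$, $Q\ge0$ and $x\in\mathbb{R}$, $$\psi(x,S,Q)<S|x|\big[2\ln(1+2x^2)+3Q+3S\big].$$
   Context: For $\theta\in\mathbb{R}$, $S>0$, $Q\ge0$: $\psi^*(\theta,S,Q)=\exp\big(\max_{\beta\in[-1/2,1/2]}(\theta\beta-\beta^2S^2)-Q\big)$, and $\psi(x,S,Q)=\sup_{\theta\in\mathbb{R}}(\theta x-\psi^*(\theta,S,Q))$. *)

(* Defs.v *)
From HB Require Import structures.
From mathcomp Require Import all_boot all_order all_algebra.
From mathcomp Require Import all_classical all_reals all_analysis.
Set Implicit Arguments. Unset Strict Implicit. Unset Printing Implicit Defensive.
Import Order.TTheory GRing.Theory Num.Theory.
Local Open Scope classical_set_scope.
Local Open Scope ring_scope.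

(* max_{beta in [-1/2,1/2]} (theta*beta - beta^2 S^2), as a supremum over a
   compact interval (the maximum is attained by continuity). *)
Definition inner_max {R : realType} (theta S : R) : R :=
  sup [set theta * b - b ^+ 2 * S ^+ 2 | b in `[(-(1/2)) : R, 1/2]%classic].

Definition psistar {R : realType} (theta S Q : R) : R :=
  expR (inner_max theta S - Q).

(* psi(x,S,Q) = sup_theta (theta x - psi^*(theta,S,Q)), taken in the extended
   reals so that no finiteness is presupposed. *)
Definition psi {R : realType} (x S Q : R) : \bar R :=
  ereal_sup [set ((theta * x - psistar theta S Q)%:E) | theta in [set: R]].

(* Main.v *)
Require Import Defs.
From HB Require Import structures.
From mathcomp Require Import all_boot all_order all_algebra.
From mathcomp Require Import all_classical all_reals all_analysis.
From mathcomp Require Import ring lra.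
Set Implicit Arguments. Unset Strict Implicit.
Import Order.TTheory GRing.Theory Num.Theory.
Local Open Scope ring_scope.

Lemma inner_ge (R : realType) (th S : R) :
  `|th| / 2 - S ^+ 2 / 4 <= inner_max th S.
Proof.
rewrite /inner_max.
have -> : `|th| / 2 - S ^+ 2 / 4 =
  th * (if 0 <= th then 1/2 else -(1/2)) - (if 0 <= th then 1/2 else -(1/2)) ^+ 2 * S ^+ 2.
  case: ifPn => h.
    rewrite ger0_norm //; rewrite expr2; lra.
  rewrite ltr0_norm ?ltNge //; rewrite !expr2; lra.
apply: ub_le_sup.
  exists (`|th| / 2) => _ [b /= hb <-].
  move: hb; rewrite /= in_itv /= => /andP [h1 h2].
  have hb : `|b| <= 1/2 by rewrite ler_norml h1 h2.
  have : th * b <= `|th| * `|b| by rewrite -normrM ler_norm.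
  have : `|th| * `|b| <= `|th| * (1/2) by rewrite ler_wpM2l.
  have : 0 <= b ^+ 2 * S ^+ 2 by rewrite mulr_ge0 // sqr_ge0.
  lra.
exists (if 0 <= th then 1/2 else -(1/2)) => //.
rewrite /= in_itv /=; case: ifP => _; apply/andP; split; lra.
Qed.

Lemma exp_tangent (R : realType) (y a : R) : 0 < a ->
  a * (1 + y - ln a) <= expR y.
Proof.
move=> ha.
have -> : expR y = a * expR (y - ln a).
  by rewrite expRD expRN lnK ?posrE // mulrCA divff ?mulr1 // gt_eqF.
rewrite ler_pM2l //.
have := expR_ge1Dx (y - ln a); lra.
Qed.

Theorem lemma12 (R : realType) (S Q x : R) (hS : 1 <= S) (hQ : 0 <= Q) :
  (psi x S Q < (S * `|x| * (2 * ln (1 + 2 * x ^+ 2) + 3 * Q + 3 * S))%:E)%E.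
Proof.
set c := S ^+ 2 / 4 + Q.
have hps : forall th, expR (`|th| / 2 - c) <= psistar th S Q.
  move=> th; rewrite /psistar ler_expR /c.
  have := inner_ge th S; lra.
have hS2 : 1 <= S ^+ 2 by rewrite expr2; nra.
have hL2 : 0 <= ln (1 + 2 * x ^+ 2).
  apply: ln_ge0; have := sqr_ge0 x; lra.
have [x0|xn0] := eqVneq x 0.
  subst x.
  apply: (@le_lt_trans _ _ (- expR (- c))%:E).
    apply: ge_ereal_sup => _ [th _ <-]; rewrite lee_fin.
    have := hps th.
    have : expR (- c) <= expR (`|th| / 2 - c).
      by rewrite ler_expR; have := normr_ge0 th; lra.
    rewrite mulr0; lra.
  rewrite lte_fin normr0 mulr0 mul0r.
  have := expR_gt0 (- c); lra.
set a := `|x|.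
have ha : 0 < a by rewrite normr_gt0.
pose B := 2 * a * (c + ln (2 * a) - 1).
apply: (@le_lt_trans _ _ B%:E).
  apply: ge_ereal_sup => _ [th _ <-]; rewrite lee_fin.
  have h1 := hps th.
  have h2 := exp_tangent (`|th| / 2 - c) (_ : 0 < 2 * a).
  have h3 : th * x <= `|th| * a by rewrite /a -normrM ler_norm.
  have h4 : 0 < 2 * a by lra.
  have := h2 h4; rewrite /B; lra.
rewrite lte_fin /B.
have hl : ln (2 * a) <= ln (1 + 2 * x ^+ 2).
  rewrite ler_ln ?posrE; first last.
  - have := sqr_ge0 x; lra.
  - lra.
  have : x ^+ 2 = a ^+ 2 by rewrite /a real_normK ?num_real.
  move=> ->; have := sqr_ge0 (a - 1); rewrite !expr2; nra.
set L1 := ln (2 * a) in hl *. set L2 := ln (1 + 2 * x ^+ 2) in hL2 hl *.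
rewrite /c.
have h5 : 0 <= (S - 1) * L2 by rewrite mulr_ge0 //; lra.
have h6 : 0 <= (S - 1) * Q by rewrite mulr_ge0 //; lra.
have h7 : S ^+ 2 / 2 + 2 * Q + 2 * L1 - 2 < 2 * S * L2 + 3 * S * Q + 3 * S ^+ 2.
  have : S ^+ 2 <= S * S by rewrite expr2.
  nra.
have := ltr_pM2l ha; move=> hm.
have : a * (S ^+ 2 / 2 + 2 * Q + 2 * L1 - 2) < a * (2 * S * L2 + 3 * S * Q + 3 * S ^+ 2).
  by rewrite ltr_pM2l.
have -> : 2 * a * (S ^+ 2 / 4 + Q + L1 - 1) = a * (S ^+ 2 / 2 + 2 * Q + 2 * L1 - 2) by rewrite (_ : S ^+ 2 / 2 = 2 * (S ^+ 2 / 4)); [ring | lra].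
have -> : S * a * (2 * L2 + 3 * Q + 3 * S) = a * (2 * S * L2 + 3 * S * Q + 3 * S ^+ 2) by ring.
by [].
Qed.
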